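(* Let $P,Q_1,Q_2\in K\langle\partial_t\rangle$ be monic with $P=Q_1Q_2$, and suppose $Q_2$ is semisplit. Then $P$ is semisplit if and only if $Q_1$ is semisplit.
   Context: Let $k$ be an algebraically closed field of characteristic zero and $K=k(t,x_1,\dots,x_n)$ with the commuting derivations $\partial_t=\partial/\partial t$ and $\partial_{x_i}=\partial/\partial x_i$. Let $\mathcal U$ be a universal differential extension field of $K$ (in the sense of Kolchin), with commuting derivations extending these. Set $C_t=\{c\in\mathcal U\mid\partial_t(c)=0\}$ and $C_{\mathbf x}=\{c\in\mathcal U\mid \partial_{x_i}(c)=0\text{ for all }i\}$. An element $f\in\mathcal U$ is split if $f=gh$ with $g\in C_t$, $h\in C_{\mathbf x}$, and semisplit if it is a finite sum of split elements. A nonzero operator $P\in K\langle\partial_t\rangle$ is semisplit if it is monic and all of its coefficients are semisplit. *)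

(* Defs.v *)
From HB Require Import structures.
From mathcomp Require Import all_boot all_order all_algebra.
From mathcomp Require Import mpoly.
Set Implicit Arguments. Unset Strict Implicit. Unset Printing Implicit Defensive.
Import Order.TTheory GRing.Theory Num.Theory.
Local Open Scope ring_scope.

Section DiffDefs.
Variable (m : nat) (U : fieldType) (D : 'I_m -> U -> U).

Definition is_derivation (d : U -> U) : Prop :=
  (forall a b, d (a + b) = d a + d b) /\ (forall a b, d (a * b) = d a * b + a * d b).

Definition diff_field : Prop :=
  (forall i, is_derivation (D i)) /\ (forall i j a, D i (D j a) = D j (D i a)).

Definition dsubfield (S : U -> Prop) : Prop :=
  S 0 /\ S 1 /\ (forall a b, S a -> S b -> S (a - b)) /\
  (forall a b, S a -> S b -> S (a * b)) /\ (forall a, S a -> S a^-1) /\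
  (forall i a, S a -> S (D i a)).

Definition dgen (A : U -> Prop) (y : U) : Prop :=
  forall S, dsubfield S -> (forall a, A a -> S a) -> S y.

End DiffDefs.

(* Kolchin: U is a universal differential extension field of the differential
   subfield K: for every differential field F, finitely generated over K inside U,
   every finitely generated differential extension G of F embeds (differentially)
   into U over F. The extension F -> G is given by a differential field morphism j
   (defined on F). *)
Definition universal_over (m : nat) (U : fieldType) (D : 'I_m -> U -> U)
    (K : U -> Prop) : Prop :=
  forall (s : seq U) (G : fieldType) (DG : 'I_m -> G -> G) (j : U -> G) (sG : seq G),
  let F := dgen D (fun a => K a \/ a \in s) in
  diff_field DG ->
  j 1 = 1 ->
  (forall a b, F a -> F b -> j (a + b) = j a + j b /\ j (a * b) = j a * j b) ->
  (forall i a, F a -> j (D i a) = DG i (j a)) ->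
  (forall y, dgen DG (fun b => (exists2 a, F a & b = j a) \/ b \in sG) y) ->
  exists e : G -> U,
    [/\ e 1 = 1, (forall b c, e (b + c) = e b + e c),
        (forall b c, e (b * c) = e b * e c),
        (forall i b, e (DG i b) = D i (e b))
      & (forall a, F a -> e (j a) = a)].

Definition dt (n : nat) (U : Type) (D : 'I_n.+1 -> U -> U) := D ord0.
Definition dx (n : nat) (U : Type) (D : 'I_n.+1 -> U -> U) (i : 'I_n) := D (lift ord0 i).

(* the point (t, x_1, ..., x_n) of U^(n+1) *)
Definition tx (n : nat) (U : Type) (t : U) (x : 'I_n -> U) (i : 'I_n.+1) : U :=
  oapp x t (unlift ord0 i).

Definition evk (k : closedFieldType) (n : nat) (U : fieldType)
    (iota : {rmorphism k -> U}) (t : U) (x : 'I_n -> U) (p : {mpoly k[n.+1]}) : U :=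
  (map_mpoly iota p).@[tx t x].

(* iota(k)(t, x_1, ..., x_n) is a copy of the differential field
   K = k(t, x_1, ..., x_n) with the standard partial derivations *)
Definition is_K_setup (k : closedFieldType) (n : nat) (U : fieldType)
    (D : 'I_n.+1 -> U -> U) (iota : {rmorphism k -> U}) (t : U) (x : 'I_n -> U) : Prop :=
  (forall i c, D i (iota c) = 0) /\
  dt D t = 1 /\ (forall i, dt D (x i) = 0) /\
  (forall i, dx D i t = 0) /\
  (forall i j, dx D i (x j) = (i == j)%:R) /\
  (forall p : {mpoly k[n.+1]}, evk iota t x p = 0 -> p = 0).

Definition inK (k : closedFieldType) (n : nat) (U : fieldType)
    (iota : {rmorphism k -> U}) (t : U) (x : 'I_n -> U) (f : U) : Prop :=
  exists p q : {mpoly k[n.+1]},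
    evk iota t x q != 0 /\ f = evk iota t x p / evk iota t x q.

Definition Ct (n : nat) (U : fieldType) (D : 'I_n.+1 -> U -> U) (c : U) : Prop :=
  dt D c = 0.
Definition Cx (n : nat) (U : fieldType) (D : 'I_n.+1 -> U -> U) (c : U) : Prop :=
  forall i, dx D i c = 0.
Definition split_elt (n : nat) (U : fieldType) (D : 'I_n.+1 -> U -> U) (f : U) : Prop :=
  exists g h, [/\ Ct D g, Cx D h & f = g * h].
Definition semisplit (n : nat) (U : fieldType) (D : 'I_n.+1 -> U -> U) (f : U) : Prop :=
  exists s : seq U, (forall g, g \in s -> split_elt D g) /\ f = \sum_(g <- s) g.

(* Ore operators sum_i a_i d^i are represented by their coefficient polynomial
   sum_i a_i 'X^i in {poly U}; ore_mul d is the product of the Ore ring U<d>: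
   (a d^i)(q) = a sum_l C(i,l) d^l(q) d^(i-l). *)
Definition ore_mul (U : fieldType) (d : U -> U) (p q : {poly U}) : {poly U} :=
  \sum_(0 <= i < size p) \sum_(0 <= l < i.+1)
     (p`_i * ('C(i, l))%:R) *: (map_poly (iter l d) q * 'X^(i - l)).

Definition inKop (k : closedFieldType) (n : nat) (U : fieldType)
    (iota : {rmorphism k -> U}) (t : U) (x : 'I_n -> U) (P : {poly U}) : Prop :=
  forall i, inK iota t x P`_i.

Definition semisplit_op (n : nat) (U : fieldType) (D : 'I_n.+1 -> U -> U)
    (P : {poly U}) : Prop :=
  P \is monic /\ forall i, semisplit D P`_i.

(* Main.v *)
Require Import Defs.
From HB Require Import structures.
From mathcomp Require Import all_boot all_order all_algebra.
From mathcomp Require Import mpoly.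
From mathcomp Require Import zify.
Import GRing.Theory.
Local Open Scope ring_scope.

Section Closure.
Variables (n : nat) (U : fieldType) (D : 'I_n.+1 -> U -> U).
Hypothesis hD : diff_field D.

Lemma der0 i : D i 0 = 0.
Proof.
have [ad _] := hD.1 i. have := ad 0 0. rewrite addr0 => e.
by apply: (@addrI _ (D i 0)); rewrite addr0 -e.
Qed.

Lemma derN i a : D i (- a) = - D i a.
Proof.
have [ad _] := hD.1 i. apply/eqP; rewrite -subr_eq0 opprK addrC -ad.
by rewrite subrr der0.
Qed.

Lemma derD i a b : D i (a + b) = D i a + D i b.
Proof. by have [ad _] := hD.1 i. Qed.

Lemma derM i a b : D i (a * b) = D i a * b + a * D i b.
Proof. by have [_ md] := hD.1 i. Qed.

Lemma der1 i : D i 1 = 0.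
Proof.
have := derM i 1 1; rewrite !mulr1 mul1r => e.
by apply: (@addrI _ (D i 1)); rewrite addr0 -e.
Qed.

Lemma ss0 : semisplit D 0.
Proof. by exists [::]; rewrite big_nil. Qed.

Lemma ssD a b : semisplit D a -> semisplit D b -> semisplit D (a + b).
Proof.
move=> [s1 [h1 ->]] [s2 [h2 ->]]; exists (s1 ++ s2); split; last by rewrite big_cat.
by move=> g; rewrite mem_cat => /orP[/h1|/h2].
Qed.

Lemma ss_sum (I : Type) (r : seq I) (F : I -> U) :
  (forall i, semisplit D (F i)) -> semisplit D (\sum_(i <- r) F i).
Proof. move=> h; apply: big_ind => //; [exact: ss0|exact: ssD]. Qed.

Lemma split_ss g : split_elt D g -> semisplit D g.
Proof. by move=> h; exists [:: g]; rewrite big_seq1; split => // y; rewrite inE => /eqP->. Qed.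


Lemma ssN a : semisplit D a -> semisplit D (- a).
Proof.
move=> [s [h ->]]; rewrite -sumrN big_seq; apply: big_ind => //; first exact: ss0.
  exact: ssD.
move=> g /h [g1 [h1 [c1 c2 ->]]]; apply: split_ss; exists (- g1), h1; split => //.
  by rewrite /Ct /dt derN; move: c1; rewrite /Ct /dt => ->; rewrite oppr0.
by rewrite mulNr.
Qed.

Lemma ssB a b : semisplit D a -> semisplit D b -> semisplit D (a - b).
Proof. by move=> ha hb; apply: ssD => //; apply: ssN. Qed.

Lemma split_mul g1 g2 : split_elt D g1 -> split_elt D g2 -> split_elt D (g1 * g2).
Proof.
move=> [a1 [b1 [c1 d1 ->]]] [a2 [b2 [c2 d2 ->]]]; exists (a1 * a2), (b1 * b2); split.
- by rewrite /Ct /dt in c1 c2 *; rewrite derM c1 c2 !(mulr0, mul0r) addr0.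
- by move=> i; rewrite /Cx /dx in d1 d2 *; rewrite derM d1 d2 !(mulr0, mul0r) addr0.
by rewrite mulrACA.
Qed.

Lemma ssM a b : semisplit D a -> semisplit D b -> semisplit D (a * b).
Proof.
move=> [s1 [h1 ->]] [s2 [h2 ->]]; rewrite big_distrl /= big_seq.
apply: big_ind; [exact: ss0|exact: ssD|] => g1 /h1 sg1.
rewrite big_distrr /= big_seq; apply: big_ind; [exact: ss0|exact: ssD|] => g2 /h2 sg2.
by apply: split_ss; apply: split_mul.
Qed.

Lemma ss1 : semisplit D 1.
Proof.
apply: split_ss; exists 1, 1; split; first by rewrite /Ct /dt der1.
  by move=> i; rewrite /dx der1.
by rewrite mulr1.
Qed.

Lemma ssn m : semisplit D m%:R.
Proof. elim: m => [|m IH]; [exact: ss0|by rewrite -addn1 natrD; apply: ssD => //; apply: ss1]. Qed.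

Lemma dt_sum (s : seq U) : dt D (\sum_(g <- s) g) = \sum_(g <- s) dt D g.
Proof.
elim: s => [|a s IH]; first by rewrite !big_nil /dt der0.
by rewrite !big_cons /dt derD -IH.
Qed.

Lemma ss_dt a : semisplit D a -> semisplit D (dt D a).
Proof.
move=> [s [h ->]]; rewrite dt_sum big_seq; apply: big_ind; [exact: ss0|exact: ssD|].
move=> g /h [g1 [h1 [c1 c2 ->]]]; apply: split_ss; exists g1, (dt D h1); split => //.
  move=> i; rewrite /dx /dt hD.2 -/(dx D i h1) c2 der0 //.
by rewrite /dt derM -/(dt D g1) c1 mul0r add0r.
Qed.

Lemma ss_iter l a : semisplit D a -> semisplit D (iter l (dt D) a).
Proof. by move=> h; elim: l => //= l IH; apply: ss_dt. Qed.

Lemma iter0 l : iter l (dt D) 0 = 0.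
Proof. by elim: l => //= l ->; rewrite /dt der0. Qed.

End Closure.

Lemma ore_coef (U : fieldType) (d : U -> U) p q m :
  (ore_mul d p q)`_m = \sum_(0 <= i < size p) \sum_(0 <= l < i.+1)
     p`_i * ('C(i, l))%:R *
     (if (m < i - l)%N then 0 else (map_poly (iter l d) q)`_(m - (i - l))%N).
Proof.
rewrite /ore_mul coef_sum; apply: eq_bigr => i _; rewrite coef_sum.
apply: eq_bigr => l _; rewrite coefZ coefMXn; by case: ifP; rewrite ?mulr0.
Qed.

Lemma aux1 (i l j s : nat) : (l < i.+1)%N -> (i <= j)%N -> (0 < s)%N -> i = j -> l <> 0%N ->
  (s <= j + s.-1 - (i - l))%N.
Proof. lia. Qed.

Lemma aux2 (i l j s : nat) : (l < i.+1)%N -> (i <= j)%N -> (0 < s)%N -> i <> j ->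
  (s <= j + s.-1 - (i - l))%N.
Proof. lia. Qed.

Theorem mainTheorem10
  (k : closedFieldType) (hk : [pchar k] =i pred0) (n : nat)
  (U : fieldType) (D : 'I_n.+1 -> U -> U)
  (iota : {rmorphism k -> U}) (t : U) (x : 'I_n -> U)
  (hD : diff_field D) (hK : is_K_setup D iota t x)
  (hU : universal_over D (inK iota t x))
  (P Q1 Q2 : {poly U})
  (hP : inKop iota t x P) (hQ1 : inKop iota t x Q1) (hQ2 : inKop iota t x Q2)
  (mP : P \is monic) (mQ1 : Q1 \is monic) (mQ2 : Q2 \is monic)
  (hPQ : P = ore_mul (dt D) Q1 Q2)
  (sQ2 : semisplit_op D Q2) :
  semisplit_op D P <-> semisplit_op D Q1.
Proof.
have [_ sq2] := sQ2.
have mapc l j : (map_poly (iter l (dt D)) Q2)`_j = iter l (dt D) Q2`_j.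
  by rewrite coef_map_id0 // iter0.
split => [[_ sP]|[_ sq1]]; split => //; last first.
  move=> m; rewrite hPQ ore_coef; apply: ss_sum => // i; apply: ss_sum => // l.
  apply: ssM => //; first by apply: ssM => //; apply: ssn.
  by case: ifP => _; [apply: ss0|rewrite mapc; apply: ss_iter].
set d2 := (size Q2).-1.
have sz2 : (0 < size Q2)%N by rewrite size_poly_gt0 monic_neq0.
have lc2 : Q2`_d2 = 1 by have := monicP mQ2; rewrite lead_coefE.
suff H : forall kk j, (size Q1 <= j + kk)%N -> semisplit D Q1`_j.
  by move=> j; apply: (H (size Q1)); rewrite leq_addl.
elim=> [|kk IH] j hj.
  by rewrite addn0 in hj; rewrite nth_default //; exact: ss0.
case: (ltnP j (size Q1)) => hjs; last by rewrite nth_default //; exact: ss0.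
set m := (j + d2)%N.
set T := fun i l => Q1`_i * ('C(i, l))%:R *
     (if (m < i - l)%N then 0 else (map_poly (iter l (dt D)) Q2)`_(m - (i - l))%N).
set T' := fun i l => if (i == j) && (l == 0)%N then 0 else T i l.
have E : P`_m = \sum_(0 <= i < size Q1) \sum_(0 <= l < i.+1) T i l.
  by rewrite hPQ ore_coef.
have key : \sum_(0 <= i < size Q1) \sum_(0 <= l < i.+1) T i l =
    Q1`_j + \sum_(0 <= i < size Q1) \sum_(0 <= l < i.+1) T' i l.
  have ind : \sum_(0 <= i < size Q1) \sum_(0 <= l < i.+1)
      (if (i == j) && (l == 0)%N then Q1`_j else 0) = Q1`_j.
    rewrite (bigD1_seq j) ?mem_index_iota ?iota_uniq //=.
    rewrite [X in _ + X]big1 ?addr0; last first.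
      by move=> i /negbTE ij; rewrite big1 // => l _; rewrite ij.
    by rewrite big_nat_recl //= eqxx /= big1 ?addr0.
  rewrite -[X in X + _]ind -big_split; apply: eq_bigr => i _.
  rewrite -big_split; apply: eq_bigr => l _ /=; rewrite /T'.
  case: ifP => [/andP[/eqP -> /eqP ->]|_]; last by rewrite add0r.
  rewrite addr0 /T bin0 mulr1 subn0 ltnNge leq_addr /= addKn mapc /= lc2.
  by rewrite mulr1.
have sT : semisplit D (\sum_(0 <= i < size Q1) \sum_(0 <= l < i.+1) T' i l).
  rewrite big_seq; apply: big_ind; [exact: ss0|exact: ssD|] => i _.
  rewrite big_seq; apply: big_ind; [exact: ss0|exact: ssD|] => l.
  rewrite mem_index_iota => /andP[_ hli].
  rewrite /T'; case: ifP => [_|hne]; first exact: ss0.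
  rewrite /T; case: (ltnP j i) => hij.
    apply: ssM => //; first by apply: ssM => //; [apply: IH; lia|apply: ssn].
    by case: ifP => _; [apply: ss0|rewrite mapc; apply: ss_iter].
  case: ifP => _; first by rewrite mulr0; apply: ss0.
  rewrite mapc [Q2`_ _]nth_default; first by rewrite (iter0 _ _ _ hD) mulr0; apply: ss0.
  rewrite /m /d2; move: hne; case: (i =P j) => [eij|ne] /=;
    [move/negbT/eqP => hl0; exact: (aux1 _ _ _ _ hli hij sz2 eij hl0)
    | move=> _; exact: (aux2 _ _ _ _ hli hij sz2 ne)].
have -> : Q1`_j = P`_m - \sum_(0 <= i < size Q1) \sum_(0 <= l < i.+1) T' i l.
  by rewrite E key addrK.
exact: ssB.
Qed.
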